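(* Let $F$ be an infinite field and $n\ge3$. Let $z_1,\dots,z_k$ be distinct variables of degrees $g_1,\dots,g_k\in\{1,\dots,n-1\}$ with $g_1+\dots+g_k\le n-1$, and $y_1,\dots,y_t$ distinct variables of degree $0$. Then the pairwise distinct commutators $$[z_1,a^{(1)}_1y_1,\dots,a^{(1)}_ty_t,z_{\sigma(2)},a^{(2)}_1y_1,\dots,a^{(2)}_ty_t,\dots,z_{\sigma(k)},a^{(k)}_1y_1,\dots,a^{(k)}_ty_t],$$ with $\sigma\in S_k$, $\sigma(1)=1$ and $a^{(s)}_i\ge0$, are linearly independent modulo the $T_{\mathbb{Z}_n}$-ideal $I$ of graded identities of $UT_n(F)^{(-)}$.
   Context: $UT_n(F)^{(-)}$: $n\times n$ upper triangular matrices with bracket $[a,b]=ab-ba$ and canonical $\mathbb{Z}_n$-grading (degree-$k$ component spanned by $e_{ij}$, $j-i=k$); nonzero elements of $\mathbb{Z}_n$ are identified with $1,\dots,n-1$. $I$ is the set of polynomials in the free $\mathbb{Z}_n$-graded Lie algebra vanishing on $UT_n(F)^{(-)}$ under degree-respecting substitutions. Commutators are left normed; $ay$ inside a commutator means $y$ repeated $a$ times consecutively. *)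

(* Defs.v *)
From mathcomp Require Import all_boot all_order all_fingroup all_algebra.
Set Implicit Arguments. Unset Strict Implicit. Unset Printing Implicit Defensive.
Import GRing.Theory.
Local Open Scope ring_scope.

Definition lbr (R : pzRingType) (n : nat) (A B : 'M[R]_n) : 'M[R]_n :=
  A *m B - B *m A.

Definition lcomm (R : pzRingType) (n : nat) (s : seq 'M[R]_n) : 'M[R]_n :=
  match s with
  | [::] => 0
  | x :: r => foldl (@lbr R n) x r
  end.

(* A lies in the degree-g component of the canonical grading of UT_n:
   the span of the e_ij with j - i = g (g in 0..n-1). *)
Definition homog (R : pzRingType) (n g : nat) (A : 'M[R]_n) : bool :=
  [forall i : 'I_n, forall j : 'I_n, (nat_of_ord j != (nat_of_ord i + g)%N) ==> (A i j == 0)].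

(* The sequence of arguments
   z_{sigma 1}, a_1^(1) y_1, ..., a_t^(1) y_t, z_{sigma 2}, ..., a_t^(k) y_t
   with z_s := Z s, y_i := Y i and a_i^(s) := a (s, i). *)
Definition word (R : pzRingType) (n k t : nat) (sigma : 'S_k)
  (a : {ffun 'I_k * 'I_t -> nat}) (Z : 'I_k -> 'M[R]_n) (Y : 'I_t -> 'M[R]_n)
  : seq 'M[R]_n :=
  flatten [seq Z (sigma s) :: flatten [seq nseq (a (s, i)) (Y i) | i <- enum 'I_t]
          | s <- enum 'I_k].

(* Main.v *)
Require Import Defs.
From mathcomp Require Import all_boot all_order all_fingroup all_algebra.
Set Implicit Arguments. Unset Strict Implicit. Unset Printing Implicit Defensive.
Import GRing.Theory.
Local Open Scope ring_scope.

Section Univ.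
Variable F : fieldType.
Hypothesis F_infinite : forall s : seq F, exists x : F, x \notin s.

Lemma big_uniq_seq m : exists s : seq F, uniq s /\ size s = m.
Proof.
elim: m => [|m [s [us ss]]]; first by exists [::].
have [x xs] := F_infinite s.
by exists (x :: s); rewrite /= xs us ss.
Qed.

Lemma poly_all_roots (q : {poly F}) : (forall x, q.[x] = 0) -> q = 0.
Proof.
move=> Hq; apply/eqP; apply/negPn/negP => q0.
have [s [us ss]] := big_uniq_seq (size q).
have H : (size s < size q)%N.
  by apply: max_poly_roots q0 _ us; apply/allP => x _; apply/rootP.
by rewrite ss ltnn in H.
Qed.

Lemma univ_indep (T : eqType) (L : seq T) (h : T -> nat) (c : T -> F) :
  uniq L -> {in L &, injective h} ->
  (forall x : F, \sum_(p <- L) c p * x ^+ h p = 0) ->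
  forall p, p \in L -> c p = 0.
Proof.
move=> uL inj Hx p pL.
pose q := \sum_(p <- L) c p *: 'X^(h p).
have q0 : q = 0.
  apply: poly_all_roots => x; rewrite /q horner_sum -[RHS](Hx x).
  by apply: eq_bigr => i _; rewrite hornerZ hornerXn.
have := congr1 (fun r : {poly F} => r`_(h p)) q0.
rewrite coef0 /q coef_sum (bigD1_seq p) //=.
rewrite coefZ coefXn eqxx mulr1 big_seq_cond big1 ?addr0 // => i /andP[iL ip].
rewrite coefZ coefXn.
case: eqP => [/esym/inj|]; last by rewrite mulr0.
by move=> /(_ iL pL) ep; rewrite ep eqxx in ip.
Qed.
End Univ.

Lemma digits_inj (N M : nat) (a b : 'I_M -> nat) :
  (forall j, a j < N)%N -> (forall j, b j < N)%N ->
  (\sum_(j < M) a j * N ^ j = \sum_(j < M) b j * N ^ j)%N ->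
  forall j, a j = b j.
Proof.
elim: M a b => [|M IH] a b Ha Hb E j; first by case: j.
move: E; rewrite !big_ord_recl !expn0 !muln1.
have sh : forall f : 'I_M.+1 -> nat, (\sum_(i < M) f (lift ord0 i) * N ^ bump 0 i
   = N * \sum_(i < M) f (lift ord0 i) * N ^ i)%N.
  move=> f; rewrite big_distrr /=; apply: eq_bigr => i _.
  by rewrite /bump /= add1n expnS mulnCA.
rewrite !sh => E.
have E0 : a ord0 = b ord0.
  have := congr1 (modn^~ N) E.
  by rewrite ![(_ + N * _)%N]addnC ![(N * _)%N]mulnC !modnMDl !modn_small.
have N0 : (0 < N)%N by apply: leq_ltn_trans (Ha ord0).
rewrite E0 in E; move/addnI/eqP: E; rewrite eqn_mul2l eqn0Ngt N0 /= => /eqP E.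
case: (unliftP ord0 j) => [j'|] -> //.
exact: (IH (fun i => a (lift ord0 i)) (fun i => b (lift ord0 i))).
Qed.

Lemma kron_inj (T : finType) (N : nat) (a b : T -> nat) :
  (forall j, a j < N)%N -> (forall j, b j < N)%N ->
  (\sum_(j : T) a j * N ^ enum_rank j = \sum_(j : T) b j * N ^ enum_rank j)%N ->
  forall j, a j = b j.
Proof.
move=> Ha Hb E j.
have re : forall f : T -> nat, (\sum_(j : T) f j * N ^ enum_rank j =
     \sum_(m < #|T|) f (enum_val m) * N ^ m)%N.
  move=> f; rewrite (reindex (fun m : 'I_#|T| => enum_val m)) /=; last first.
    by exists enum_rank => x _; rewrite ?enum_valK ?enum_rankK.
  by apply: eq_bigr => i _; rewrite enum_valK.
rewrite !re in E.
have := digits_inj (fun m => Ha (enum_val m)) (fun m => Hb (enum_val m)) E (enum_rank j).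
by rewrite enum_rankK.
Qed.

Section Mx.
Variables (F : fieldType) (n : nat).
Local Notation M := ('M[F]_n.+1).

Lemma lbr_dd (l : F) (q a b : 'I_n.+1) : b != ord0 ->
  lbr (l *: (delta_mx ord0 q : M)) (delta_mx a b) =
  if q == a then l *: delta_mx ord0 b else 0.
Proof.
move=> b0; rewrite /lbr -scalemxAl -scalemxAr !mul_delta_mx_cond.
rewrite (negbTE b0) mulr0n scaler0 subr0.
by case: (q == a); rewrite ?mulr1n ?mulr0n ?scaler0.
Qed.

Lemma lbr_diag (l : F) (q : 'I_n.+1) (d : 'rV[F]_n.+1) :
  lbr (l *: (delta_mx ord0 q : M)) (diag_mx d) =
  (l * (d 0 q - d 0 ord0)) *: delta_mx ord0 q.
Proof.
rewrite /lbr mul_mx_diag mul_diag_mx; apply/matrixP => i j; rewrite !mxE.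
case: (eqVneq i ord0) => [->|_]; case: (eqVneq j q) => [->|_] /=;
  rewrite ?mulr1 ?mulr0 ?mul0r ?subrr //.
by rewrite mulrBr [d 0 ord0 * l]mulrC.
Qed.

Lemma lbr0l (X : M) : lbr 0 X = 0.
Proof. by rewrite /lbr mul0mx mulmx0 subrr. Qed.

Lemma foldl_lbr0 (w : seq M) : foldl (@lbr F n.+1) 0 w = 0.
Proof.
elim: w => //= x w IH; suff -> : lbr 0 x = 0 by [].
by rewrite /lbr mul0mx mulmx0 subrr.
Qed.

Lemma foldl_Ys (I : eqType) (l : seq I) (Y : I -> M) (D : I -> 'rV[F]_n.+1)
  (a : I -> nat) (lam : F) (q : 'I_n.+1) :
  (forall i, Y i = diag_mx (D i)) ->
  foldl (@lbr F n.+1) (lam *: delta_mx ord0 q) (flatten [seq nseq (a i) (Y i) | i <- l]) =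
  (lam * \prod_(i <- l) (D i 0 q - D i 0 ord0) ^+ a i) *: delta_mx ord0 q.
Proof.
move=> HY; elim: l lam => [|i l IH] lam /=; first by rewrite big_nil mulr1.
rewrite foldl_cat big_cons.
have -> : foldl (@lbr F n.+1) (lam *: delta_mx ord0 q) (nseq (a i) (Y i)) =
   (lam * (D i 0 q - D i 0 ord0) ^+ a i) *: delta_mx ord0 q.
  elim: (a i) lam => [|m IHm] lam' /=; first by rewrite expr0 mulr1.
  by rewrite HY lbr_diag -HY IHm exprS mulrA [_ * (_ - _)]mulrC -!mulrA.
by rewrite IH mulrA.
Qed.
End Mx.

Section Main.
Variables (F : fieldType) (n k t : nat) (g : 'I_k.+1 -> nat) (s0 : 'S_k.+1).
Hypothesis Hg : forall s, (0 < g s)%N.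
Hypothesis Hsum : (\sum_(s < k.+1) g s <= n)%N.
Hypothesis Hs0 : s0 ord0 = ord0.
Variable v : 'I_k.+1 -> 'I_t -> F.

Definition Pp (j : nat) : nat := (\sum_(0 <= i < j) g (s0 (inord i)))%N.

Lemma PpS j : Pp j.+1 = (Pp j + g (s0 (inord j)))%N.
Proof. by rewrite /Pp big_nat_recr. Qed.

Lemma Pp0 : Pp 0 = 0%N.
Proof. by rewrite /Pp big_geq. Qed.

Lemma Pp_lt j j' : (j < j')%N -> (Pp j < Pp j')%N.
Proof.
elim: j' => // j' IH; rewrite ltnS leq_eqVlt => /orP[/eqP ->|/IH h].
  by rewrite PpS -{1}(addn0 (Pp j')) ltn_add2l Hg.
by apply: (ltn_trans h); rewrite PpS -{1}(addn0 (Pp j')) ltn_add2l Hg.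
Qed.

Lemma Pp_inj j j' : Pp j = Pp j' -> j = j'.
Proof.
move=> E; case: (ltngtP j j') => // /Pp_lt; by rewrite E ltnn.
Qed.

Lemma Pp_max : (Pp k.+1 <= n)%N.
Proof.
rewrite /Pp big_mkord.
rewrite (eq_bigr (fun i : 'I_k.+1 => g (s0 i))); last by move=> i _; rewrite inord_val.
by apply: leq_trans Hsum; rewrite [X in (_ <= X)%N](reindex_perm s0).
Qed.

Lemma Pp_le j : (j <= k.+1)%N -> (Pp j <= n)%N.
Proof.
rewrite leq_eqVlt => /orP[/eqP ->|h]; first exact: Pp_max.
exact: leq_trans (ltnW (Pp_lt h)) Pp_max.
Qed.

Definition pos j : 'I_n.+1 := inord (Pp j).

Lemma val_pos j : (j <= k.+1)%N -> val (pos j) = Pp j.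
Proof. by move=> h; apply: inordK; rewrite ltnS Pp_le. Qed.

Lemma pos0 : pos 0 = ord0.
Proof. by apply: val_inj; rewrite val_pos // Pp0. Qed.

Lemma pos_eq j j' : (j <= k.+1)%N -> (j' <= k.+1)%N -> (pos j == pos j') = (j == j').
Proof.
move=> h h'; apply/eqP/eqP => [E|->] //.
by apply: Pp_inj; rewrite -val_pos // -(val_pos h') E.
Qed.

Definition pi (s : 'I_k.+1) : nat := val ((s0^-1)%g s).

Lemma pi_eq x m : (m < k.+1)%N -> (m == pi x) = (x == s0 (inord m)).
Proof.
move=> h; apply/eqP/eqP => [->|->]; rewrite /pi.
  by rewrite inord_val permKV.
by rewrite permK; symmetry; apply: inordK.
Qed.

Definition Zm s : 'M[F]_n.+1 := delta_mx (pos (pi s)) (pos (pi s).+1).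
Definition Dv i : 'rV[F]_n.+1 :=
  \row_p \sum_(m < k.+1) (val p == Pp m.+1)%:R * v m i.
Definition Ym i : 'M[F]_n.+1 := diag_mx (Dv i).

Lemma Dv_pos m i : (m < k.+1)%N -> Dv i 0 (pos m.+1) = v (inord m) i.
Proof.
move=> h; rewrite mxE val_pos // (bigD1 (inord m)) //= inordK // eqxx mul1r.
rewrite big1 ?addr0 // => j jm; case: eqP; last by rewrite mul0r.
move/Pp_inj => [] E; case/eqP: jm; apply: val_inj; by rewrite /= inordK.
Qed.

Lemma Dv0 i : Dv i 0 ord0 = 0.
Proof.
rewrite mxE big1 // => j _; case: eqP; last by rewrite mul0r.
by move=> E; have := Pp_lt (ltn0Sn j); rewrite Pp0 /= -E.
Qed.

Lemma Zm_homog s : homog (g s) (Zm s).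
Proof.
apply/forallP => i; apply/forallP => j; apply/implyP => H; rewrite mxE.
case: (eqVneq i (pos (pi s))) => [ei|]; last by [].
case: (eqVneq j (pos (pi s).+1)) => [ej|] //=; case/eqP: H.
have hp : (pi s < k.+1)%N by rewrite /pi ltn_ord.
rewrite ei ej !val_pos // ?(ltnW hp) // PpS; congr (_ + g _)%N.
by rewrite /pi inord_val permKV.
Qed.

Lemma Ym_homog i : homog 0 (Ym i).
Proof.
apply/forallP => p; apply/forallP => q; apply/implyP => H; rewrite mxE.
rewrite addn0 in H; case: (eqVneq p q) => [E|]; last by rewrite /= mulr0n.
by rewrite E eqxx in H.
Qed.


Definition blk (sg : 'S_k.+1) (a : {ffun 'I_k.+1 * 'I_t -> nat}) (s : 'I_k.+1)
  : seq 'M[F]_n.+1 :=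
  Zm (sg s) :: flatten [seq nseq (a (s, i)) (Ym i) | i <- enum 'I_t].

Lemma word_blk sg a :
  word sg a Zm Ym = flatten [seq blk sg a (inord j) | j <- iota 0 k.+1].
Proof.
rewrite /word -val_enum_ord -map_comp; congr flatten; apply: eq_map => s.
by rewrite /= inord_val.
Qed.

Lemma fold_blk sg a m : (m <= k.+1)%N ->
  foldl (@lbr F n.+1) (delta_mx ord0 ord0)
        (flatten [seq blk sg a (inord j) | j <- iota 0 m]) =
  if all (fun j => sg (inord j) == s0 (inord j)) (iota 0 m) then
    (\prod_(j <- iota 0 m) \prod_(i <- enum 'I_t) v (inord j) i ^+ a (inord j, i))
      *: delta_mx ord0 (pos m)
  else 0.
Proof.
elim: m => [_|m IH hm]; first by rewrite /= big_nil scale1r pos0.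
have -> : iota 0 m.+1 = iota 0 m ++ [:: m] by rewrite -addn1 iotaD.
rewrite map_cat flatten_cat foldl_cat IH ?(ltnW hm) //.
rewrite all_cat /= andbT big_cat big_seq1 /= cats0.
case: (all _ _); last by rewrite /= lbr0l foldl_lbr0.
have hm' : (m < k.+1)%N by [].
have hp : (pi (sg (inord m)) < k.+1)%N by rewrite /pi ltn_ord.
rewrite /= /Zm lbr_dd; last first.
  apply/eqP => /(congr1 val); rewrite val_pos ?hp // => E.
  by have := Pp_lt (ltn0Sn (pi (sg (inord m)))); rewrite E Pp0.
rewrite pos_eq ?(ltnW hm') ?(ltnW hp) // pi_eq //.
case: eqP => E /=; last by rewrite foldl_lbr0.
have -> : pi (sg (inord m)) = m by apply/eqP; rewrite eq_sym pi_eq // E.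
rewrite (@foldl_Ys _ _ _ _ _ Dv) //.
congr (_ *: _); congr (_ * _); apply: eq_bigr => i _.
by rewrite (Dv_pos _ hm') Dv0 subr0.
Qed.

Lemma lcomm_word (sg : 'S_k.+1) a : sg ord0 = ord0 ->
  lcomm (word sg a Zm Ym) = foldl (@lbr F n.+1) (delta_mx ord0 ord0) (word sg a Zm Ym).
Proof.
move=> h; rewrite /word enum_ordSl /= h.
have p0 : pi ord0 = 0%N.
  by rewrite /pi -{1}Hs0 permK.
have -> : lbr (delta_mx ord0 ord0) (Zm ord0) = Zm ord0.
  have := @lbr_dd F n 1 ord0 (pos (pi ord0)) (pos (pi ord0).+1).
  rewrite !scale1r p0 pos0 eqxx /Zm p0 pos0; apply.
  apply/eqP => /(congr1 val); rewrite val_pos // => E.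
  by have := Pp_lt (ltn0Sn 0); rewrite E Pp0.
by [].
Qed.

End Main.

Lemma all_perm_eq k (sg s0 : 'S_k.+1) :
  all (fun j => sg (inord j) == s0 (inord j)) (iota 0 k.+1) = (sg == s0).
Proof.
apply/allP/eqP => [H|-> //]; apply/permP => x.
have := H x; rewrite mem_iota /= ltn_ord inord_val => /(_ isT) /eqP //.
Qed.

Unset Implicit Arguments.
Unset Strict Implicit.

Theorem mainTheorem16 (F : fieldType)
  (F_infinite : forall s : seq F, exists x : F, x \notin s)
  (n k t : nat) (g : 'I_k -> nat) :
  (3 <= n)%N -> (0 < k)%N ->
  (forall s : 'I_k, (0 < g s < n)%N) ->
  (\sum_(s < k) g s <= n.-1)%N ->
  forall (S : seq ('S_k * {ffun 'I_k * 'I_t -> nat}))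
         (c : 'S_k * {ffun 'I_k * 'I_t -> nat} -> F),
  uniq S ->
  (forall p, p \in S -> forall i : 'I_k, val i = 0%N -> val (p.1 i) = 0%N) ->
  (forall (Z : 'I_k -> 'M[F]_n) (Y : 'I_t -> 'M[F]_n),
      (forall s, homog (g s) (Z s)) -> (forall i, homog 0 (Y i)) ->
      \sum_(p <- S) c p *: lcomm (word p.1 p.2 Z Y) = 0) ->
  forall p, p \in S -> c p = 0.
Proof.
move=> Hn Hk Hg Hsum S c uS HS0 Hrel p0 p0S.
destruct n as [|n]; first done.
destruct k as [|k]; first done.
set s0 := p0.1.
have Hs0 : s0 ord0 = ord0 by apply: val_inj; apply: HS0.
have Hg' : forall s, (0 < g s)%N by move=> s; case/andP: (Hg s).
have Hsum' : (\sum_(s < k.+1) g s <= n)%N by [].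
have Hsg : forall p, p \in S -> p.1 ord0 = ord0.
  by move=> p pS; apply: val_inj; apply: HS0.
pose N := (\max_(p <- S) \max_(j : 'I_k.+1 * 'I_t) p.2 j)%N.+1.
pose E (a : {ffun 'I_k.+1 * 'I_t -> nat}) :=
  (\sum_(j : 'I_k.+1 * 'I_t) a j * N ^ enum_rank j)%N.
have HN : forall p, p \in S -> forall j, (p.2 j < N)%N.
  move=> p pS j; rewrite ltnS.
  have h1 := @leq_bigmax _ (fun j => p.2 j) j.
  have h2 := @leq_bigmax_seq _ S xpredT (fun p : 'S_k.+1 * {ffun 'I_k.+1 * 'I_t -> nat} => \max_(j : 'I_k.+1 * 'I_t) p.2 j)%N p pS isT.
  exact: leq_trans h1 h2.
have key : forall x : F,
    \sum_(p <- [seq p <- S | p.1 == s0]) c p * x ^+ E p.2 = 0.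
  move=> x.
  pose v := fun (m : 'I_k.+1) (i : 'I_t) => x ^+ (N ^ enum_rank (m, i)).
  have H := Hrel (Zm F n g s0) (Ym n g s0 v)
    (Zm_homog F s0 Hg' Hsum') (Ym_homog n g s0 v).
  have := congr1 (fun M : 'M[F]_n.+1 => M ord0 (pos n g s0 k.+1)) H.
  rewrite summxE mxE big_filter big_mkcond /= => H0; rewrite -[RHS]H0.
  rewrite big_mkcond; apply: eq_big_seq => p pS.
  rewrite mxE (lcomm_word Hg' Hsum' Hs0 v _ (Hsg p pS)) word_blk.
  rewrite (fold_blk s0 Hg' Hsum') // all_perm_eq.
  case: eqP => _; last by rewrite mxE mulr0.
  rewrite !mxE !eqxx andbT mulr1; congr (_ * _).
  rewrite -val_enum_ord big_map big_enum /=.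
  under eq_bigr => j _ do rewrite inord_val big_enum /=.
  under eq_bigr => j _ do under eq_bigr => i _ do rewrite /v -exprM.
  under eq_bigr => j _ do rewrite prodrXr.
  rewrite prodrXr; congr (x ^+ _).
  rewrite /E pair_big; apply: eq_big => [[a b]|[a b] _] /=; first by rewrite !inE.
  by rewrite mulnC.
apply: (univ_indep F_infinite (filter_uniq _ uS) _ key).
  move=> p q; rewrite !mem_filter => /andP[/eqP p1 pS] /andP[/eqP q1 qS] Epq.
  move: p q p1 q1 pS qS Epq => [p1 p2] [q1 q2] /= -> -> pS qS Epq.
  congr (_, _); apply/ffunP => j.
  exact: (kron_inj (HN _ pS) (HN _ qS) Epq).
by rewrite mem_filter eqxx.
Qed.
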